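(* Let $(R,+,\times)$ be a finite ring with identity $1$, of order $n$, and let $G$ be a subgroup of the multiplicative group $R^\times$ of invertible elements of $R$, with $k=|G|$. Let $f_G$ be the coset index function induced by $G$. If $$(G-1)\setminus\{0\}\subset R^\times,\qquad\text{where } G-1=\{g-1\mid g\in G\},$$ then $f_G$ is an $\left(n,\frac{n-1}{k}+1,k-1\right)$ zero-difference balanced function from $(R,+)$ to $\mathbb{Z}_m$, where $m=\frac{n-1}{k}+1$.
   Context: For a subgroup $G$ of $R^\times$ and $r\in R$, the coset $rG=\{rg\mid g\in G\}$; the sets $rG$ ($r\in R$) form a partition $D_G$ of $R$. The coset index function induced by $G$ is $f_G(x)=h_G(C_x)$, where $C_x\in D_G$ is the coset containing $x$ and $h_G:D_G\to\mathbb{Z}_{|D_G|}$ is a fixed bijection. Definition: for finite abelian groups $A,B$, a function $f:A\to B$ is an $(n,m,\lambda)$ zero-difference balanced function (ZDBF) if $n=|A|$, $m=|f(A)|$, and for every nonzero $a\in A$, $|\{x\in A\mid f(x+a)-f(x)=0\}|=\lambda$. *)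

(* Defs.v *)
From HB Require Import structures.
From mathcomp Require Import all_boot all_order all_algebra all_fingroup.
Set Implicit Arguments. Unset Strict Implicit. Unset Printing Implicit Defensive.
Import GRing.Theory.
Local Open Scope ring_scope.

Definition coset_of_unit (R : finUnitRingType) (G : {group {unit R}}) (r : R)
  : {set R} := [set r * val g | g in G].

Definition cosets_DG (R : finUnitRingType) (G : {group {unit R}})
  : {set {set R}} := [set coset_of_unit G r | r : R].

Definition ZDBF (A B : finZmodType) (f : A -> B) (n m lam : nat) : Prop :=
  [/\ n = #|A|, m = #|[set f x | x : A]| &
      forall a : A, a != 0 -> #|[set x : A | f (x + a) - f x == 0]| = lam].

(* Main.v *)
Require Import Defs.
From HB Require Import structures.
From mathcomp Require Import all_boot all_order all_algebra all_fingroup.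
Import GRing.Theory.
Local Open Scope ring_scope.

Section Aux.
Variables (R : finUnitRingType) (G : {group {unit R}}).
Hypothesis hG : forall g : {unit R}, g \in G -> val g - 1 != 0 -> val g - 1 \is a GRing.unit.

Lemma cancelG (r : R) (g g' : {unit R}) : r != 0 -> g \in G -> g' \in G ->
  r * val g = r * val g' -> g = g'.
Proof.
move=> r0 gG g'G e.
have uG : (g'^-1 * g)%g \in G by rewrite groupM ?groupV.
have [e0|nz] := eqVneq (val (g'^-1 * g)%g - 1) 0.
  move/eqP: e0; rewrite subr_eq0 FinRing.val_unitM FinRing.val_unitV => /eqP e1.
  apply: val_inj; have := congr1 (fun y => val g' * y) e1.
  rewrite mulrA mulrV ?(valP g') // mul1r mulr1.
  by [].
have U := hG _ uG nz.
exfalso; move/negP: r0; apply; apply/eqP.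
have : r * val g' * (val (g'^-1 * g)%g - 1) = 0.
  rewrite FinRing.val_unitM FinRing.val_unitV mulrBr mulr1 mulrA -(mulrA r) mulrV ?(valP g') //.
  by rewrite mulr1 e subrr.
move/(congr1 (fun y => y * (val (g'^-1 * g)%g - 1)^-1)).
rewrite mulrK // mul0r => /(congr1 (fun y => y * (val g')^-1)).
by rewrite mulrK ?(valP g') // mul0r.
Qed.

Lemma in_coset (x y : R) : (y \in coset_of_unit G x) = [exists g in G, y == x * val g].
Proof.
apply/imsetP/existsP => [[g gG ->]|[g /andP[gG /eqP ->]]]; first by exists g; rewrite gG eqxx.
by exists g.
Qed.

Lemma coset_self (x : R) : x \in coset_of_unit G x.
Proof. by apply/imsetP; exists 1%g; rewrite ?group1 // FinRing.val_unit1 mulr1. Qed.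

Lemma coset_eq (x y : R) : (coset_of_unit G x == coset_of_unit G y) = (y \in coset_of_unit G x).
Proof.
apply/eqP/idP => [->|]; first exact: coset_self.
case/imsetP => g0 g0G ->; apply/setP => z; apply/imsetP/imsetP.
  case=> g gG ->; exists (g0^-1 * g)%g; first by rewrite groupM ?groupV.
  by rewrite FinRing.val_unitM FinRing.val_unitV mulrA -(mulrA x) mulrV ?(valP g0) // mulr1.
case=> g gG ->; exists (g0 * g)%g; first by rewrite groupM.
by rewrite FinRing.val_unitM mulrA.
Qed.

Lemma coset_sym (x y : R) : (y \in coset_of_unit G x) = (x \in coset_of_unit G y).
Proof. by rewrite -!coset_eq eq_sym. Qed.

Lemma coset0 : coset_of_unit G 0 = [set 0].
Proof.
apply/setP => z; rewrite in_set1; apply/imsetP/eqP => [[g _ ->]|->]; first by rewrite mul0r.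
by exists 1%g; rewrite ?group1 // mul0r.
Qed.

Lemma card_coset (r : R) : r != 0 -> #|coset_of_unit G r| = #|G|.
Proof.
move=> r0; apply: card_in_imset => g g' gG g'G; exact: cancelG.
Qed.

Lemma card_DG : #|R| = ((#|cosets_DG G| - 1) * #|G| + 1)%N.
Proof.
set D := cosets_DG G.
have c0D : coset_of_unit G 0 \in D by apply: imset_f.
have -> : #|R| = (\sum_(x : R) 1)%N by rewrite sum1_card.
rewrite (partition_big (fun x => coset_of_unit G x) (mem D)) /=; last first.
  by move=> x _; apply: imset_f.
have E : forall B, B \in D -> \sum_(x in R | (x \in R) && (coset_of_unit G x == B)) 1 = #|B|.
  move=> B /imsetP [r _ ->]; rewrite -sum1_card; apply: eq_bigl => x.
  by rewrite /= coset_eq coset_sym.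
rewrite (eq_bigr _ E) (bigD1 _ c0D) /= coset0 cards1 addnC; congr (_ + _)%N.
have E2 : forall B, B \in D :\ [set 0] -> #|B| = #|G|.
  move=> B; rewrite in_setD1 => /andP[nB /imsetP [r _ EB]]; rewrite EB; apply: card_coset.
  by apply: contraNneq nB => r0; rewrite EB r0 coset0.
rewrite coset0 in c0D.
rewrite (eq_bigl (mem (D :\ [set 0]))); last first.
  by move=> B; rewrite !inE andbC.
rewrite (eq_bigr _ E2).
by rewrite sum_nat_const (cardsD1 [set 0] D) c0D add1n subn1.
Qed.

Lemma unit_sub1 (g : {unit R}) : g \in G -> g != 1%g -> val g - 1 \is a GRing.unit.
Proof.
move=> gG g1; apply: hG => //; rewrite subr_eq0; apply: contra g1 => /eqP e.
by apply/eqP/val_inj; rewrite e FinRing.val_unit1.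
Qed.

Lemma mul_sub1 (a : R) (g : {unit R}) : g \in G -> g != 1%g ->
  a / (val g - 1) * val g = a / (val g - 1) + a.
Proof.
move=> gG g1; have U := unit_sub1 _ gG g1.
have e : a / (val g - 1) * (val g - 1) = a by rewrite divrK.
rewrite mulrBr mulr1 in e.
by rewrite -{3}e subrKC.
Qed.

End Aux.

Theorem corollary2p4 (R : finUnitRingType) (G : {group {unit R}})
    (h : {set R} -> 'Z_#|cosets_DG G|)
    (h_inj : {in cosets_DG G &, injective h})
    (hG : forall g : {unit R}, g \in G -> val g - 1 != 0 -> val g - 1 \is a GRing.unit) :
  ZDBF (fun x : R => h (coset_of_unit G x))
       #|R| ((#|R| - 1) %/ #|G| + 1)%N (#|G| - 1)%N.
Proof.
have c0D : coset_of_unit G 0 \in cosets_DG G by apply: imset_f.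
have d1 : (0 < #|cosets_DG G|)%N by apply/card_gt0P; exists (coset_of_unit G 0).
have k1 : (0 < #|G|)%N by apply/card_gt0P; exists 1%g; apply: group1.
split => //.
  have -> : [set h (coset_of_unit G x) | x : R] = h @: cosets_DG G.
    by rewrite -imset_comp.
  rewrite (card_in_imset h_inj) (card_DG _ _ hG) addnK mulnK // subnK //.
move=> a a0.
have key : forall x, (h (coset_of_unit G (x + a)) - h (coset_of_unit G x) == 0)
    = (coset_of_unit G x == coset_of_unit G (x + a)).
  move=> x; rewrite subr_eq0 eq_sym; apply/eqP/eqP => [/h_inj|->] //.
  by move=> -> //; apply: imset_f.
have -> : [set x : R | h (coset_of_unit G (x + a)) - h (coset_of_unit G x) == 0]
    = [set a / (val g - 1) | g in G :\ 1%g].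
  apply/setP => x; rewrite inE key coset_eq in_coset.
  apply/existsP/imsetP.
    case=> g /andP[gG /eqP e].
    have g1 : g != 1%g.
      apply: contra a0 => /eqP g1; move: e; rewrite g1 FinRing.val_unit1 mulr1.
      by move/eqP; rewrite -{2}(addr0 x) (inj_eq (addrI x)).
    exists g; first by rewrite in_setD1 g1 gG.
    have U := unit_sub1 _ _ hG _ gG g1.
    have -> : a = x * (val g - 1) by rewrite mulrBr mulr1 -e addrC addKr.
    by rewrite mulrK.
  case=> g; rewrite in_setD1 => /andP[g1 gG] ->.
  by exists g; rewrite gG /= (mul_sub1 _ _ hG) // addrC.
rewrite card_in_imset ?(cardsD1 1%g G) ?group1 ?add1n ?subn1 //.
move=> g g'; rewrite !in_setD1 => /andP[g1 gG] /andP[g1' g'G] e.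
apply: (@cancelG _ _ hG (a / (val g - 1))) => //.
  apply: contra a0 => /eqP x0.
  by rewrite -(divrK (unit_sub1 _ _ hG _ gG g1) a) x0 mul0r.
by rewrite (mul_sub1 _ _ hG) // {2}e (mul_sub1 _ _ hG) // -e.
Qed.
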